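(* For every $n\geq 1$ there is a bijection $\theta:\mathcal O_{n+1}\to\mathcal H_n$ such that for every $T\in\mathcal O_{n+1}$, $$\mathrm{young}_T(1)=\mathrm{tree}(\theta(T)),\qquad \mathrm{eld}(T)=\mathrm{bdeg}(\theta(T)),\qquad \mathrm{imp}(T)=\mathrm{imp}(\theta(T)).$$
   Context: Plane trees: rooted trees with vertices labeled by distinct positive integers in which the children of each vertex are linearly ordered (left to right). A vertex $j$ is a descendant of $i$ if the path from the root to $j$ passes through $i$ (each vertex is a descendant of itself); $\beta_T(i)$ is the smallest descendant of $i$. A child of $i$ is a descendant joined to $i$ by an edge $(i,j)$; children of the same vertex are brothers. In a plane tree $T$, a vertex $j$ is elder if it has a brother $k$ to its right with $\beta_T(k)<\beta_T(j)$. $\mathrm{eld}_T(v)$ = number of elder children of $v$, $\mathrm{eld}(T)$ = number of elder vertices of $T$, $\mathrm{young}_T(v)=\deg_T(v)-\mathrm{eld}_T(v)$ where $\deg_T(v)$ is the number of children. An edge $(i,j)$ is proper if $j$ is an elder child of $i$ or $i<\beta_T(j)$, and improper otherwise; $\mathrm{imp}(T)$ is the number of improper edges. $\mathcal O_{n+1}$ is the set of all plane trees on $[n+1]$ with root $1$. Half-mobile trees: a half-mobile tree on a set $S$ is a rooted tree with two kinds of vertices, labeled (white) and unlabeled (black), such that the white vertices are in bijection with $S$; each black vertex has at least two children, all of them white; there is a fixed cyclic order on the children of each black vertex; the children of white vertices are unordered. For a vertex $v$, $\beta_T(v)$ is the smallest white descendant of $v$. The children of a black vertex are listed in the linear order compatible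 with its cyclic order whose last (rightmost) element is the child with smallest $\beta_T$. An edge $e=(u,v)$ ($v$ a child of $u$) is improper if either $u,v$ are both white and $u>\beta_T(v)$, or $u$ is black, $v$ is its rightmost child, and $u$ has a (white) parent whose label is greater than $\beta_T(v)$. A forest of half-mobile trees on $[n]$ is a graph whose connected components are half-mobile trees and whose set of white vertices is $[n]$; $\mathcal H_n$ is the set of all such forests. For $F\in\mathcal H_n$: $\mathrm{imp}(F)$ is the number of improper edges, $\mathrm{tree}(F)$ the number of component trees, and $\mathrm{bdeg}(F)=\sum_v(\deg_F(v)-1)$, summed over black vertices $v$ with $\deg_F(v)$ the number of children of $v$. *)

(* Defs.v *)
From mathcomp Require Import all_boot.
Set Implicit Arguments. Unset Strict Implicit. Unset Printing Implicit Defensive.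

(* A plane tree: a labelled vertex with a linearly ordered (left to right)
   list of subtrees.  Distinct terms are exactly distinct plane trees. *)
Inductive ptree := PNode of nat & seq ptree.

Definition proot (t : ptree) : nat := let: PNode l _ := t in l.
Definition pchildren (t : ptree) : seq ptree := let: PNode _ cs := t in cs.

Fixpoint plabels (t : ptree) : seq nat :=
  match t with PNode l cs => l :: flatten (map plabels cs) end.

Definition pbeta (t : ptree) : nat :=
  let ls := plabels t in foldr minn (head 0 ls) ls.

Fixpoint elder_flags (cs : seq ptree) : seq bool :=
  match cs with
  | [::] => [::]
  | c :: cs' => has (fun d => pbeta d < pbeta c) cs' :: elder_flags cs'
  end.

Definition eld_v (t : ptree) : nat := count id (elder_flags (pchildren t)).
Definition deg_v (t : ptree) : nat := size (pchildren t).
Definition young_v (t : ptree) : nat := deg_v t - eld_v t.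

Fixpoint eldT (t : ptree) : nat :=
  match t with PNode l cs => count id (elder_flags cs) + sumn (map eldT cs) end.

Fixpoint impT (t : ptree) : nat :=
  match t with
  | PNode l cs =>
      sumn [seq (~~ p.1 && ~~ (l < pbeta p.2) : nat) | p <- zip (elder_flags cs) cs]
      + sumn (map impT cs)
  end.

Definition in_O (n : nat) (t : ptree) : bool :=
  (proot t == 1) && perm_eq (plabels t) (iota 1 n.+1).

(* HW l cs : white vertex labelled l with children cs;
   HB cs   : black (unlabelled) vertex with children cs.
   Canonical representatives:
   - children of a white vertex (unordered) are listed by increasing beta;
   - children of a black vertex (cyclically ordered) are listed in the linear
     order compatible with the cyclic order whose last element has smallest
     beta (this representative of the cyclic order is unique);
   - the trees of a forest are listed by increasing beta. *)
Inductive hmtree := HW of nat & seq hmtree | HB of seq hmtree.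

Definition isW (t : hmtree) : bool := if t is HW _ _ then true else false.

Fixpoint hwhites (t : hmtree) : seq nat :=
  match t with
  | HW l cs => l :: flatten (map hwhites cs)
  | HB cs => flatten (map hwhites cs)
  end.

Definition hbeta (t : hmtree) : nat :=
  let ls := hwhites t in foldr minn (head 0 ls) ls.

Fixpoint hwf (t : hmtree) : bool :=
  match t with
  | HW l cs => sorted ltn (map hbeta cs) && all hwf cs
  | HB cs => [&& 1 < size cs, all isW cs,
                 all (fun d => hbeta (last (HB [::]) cs) <= hbeta d) cs
               & all hwf cs]
  end.

Definition in_H (n : nat) (F : seq hmtree) : bool :=
  [&& sorted ltn (map hbeta F), all hwf F
    & perm_eq (flatten (map hwhites F)) (iota 1 n)].

Definition treeF (F : seq hmtree) : nat := size F.

Fixpoint bdeg (t : hmtree) : nat :=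
  match t with
  | HW _ cs => sumn (map bdeg cs)
  | HB cs => (size cs).-1 + sumn (map bdeg cs)
  end.
Definition bdegF (F : seq hmtree) : nat := sumn (map bdeg F).

(* improper edges; p = label of the parent of the current vertex, if it has
   a (necessarily white when the vertex is black) parent *)
Fixpoint himp (p : option nat) (t : hmtree) : nat :=
  match t with
  | HW l cs => sumn [seq (isW c && (l > hbeta c) : nat) + himp (Some l) c | c <- cs]
  | HB cs =>
      (if p is Some l then (l > hbeta (last (HB [::]) cs) : nat) else 0)
      + sumn (map (himp None) cs)
  end.
Definition impF (F : seq hmtree) : nat := sumn (map (himp None) F).

(* Main.v *)
Require Import Defs.
From HB Require Import structures.
From mathcomp Require Import all_boot zify.
Set Implicit Arguments. Unset Strict Implicit. Unset Printing Implicit Defensive.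

Lemma eq_map_In (A B : Type) (f g : A -> B) (s : seq A) :
  (forall x, List.In x s -> f x = g x) -> map f s = map g s.
Proof. elim: s => //= x s IH H; rewrite H ?IH //; [move=> y hy; apply: H|]; by [right|left]. Qed.

Definition ptree_indIn (P : ptree -> Prop)
  (H : forall l cs, (forall c, List.In c cs -> P c) -> P (PNode l cs)) : forall t, P t :=
  fix F t := match t with PNode l cs => H l cs
    ((fix G (s : seq ptree) : forall c, List.In c s -> P c :=
       match s with
       | [::] => fun c (hc : List.In c [::]) => match hc with end
       | x :: s' => fun c hc => match hc with
                    | or_introl e => eq_ind x P (F x) c e
                    | or_intror h => G s' c h end
       end) cs) end.

Definition hm_indIn (P : hmtree -> Prop)
  (H1 : forall l cs, (forall c, List.In c cs -> P c) -> P (HW l cs))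
  (H2 : forall cs, (forall c, List.In c cs -> P c) -> P (HB cs)) : forall t, P t :=
  fix F t :=
  let G := (fix G (s : seq hmtree) : forall c, List.In c s -> P c :=
       match s with
       | [::] => fun c (hc : List.In c [::]) => match hc with end
       | x :: s' => fun c hc => match hc with
                    | or_introl e => eq_ind x P (F x) c e
                    | or_intror h => G s' c h end
       end) in
  match t with HW l cs => H1 l cs (G cs) | HB cs => H2 cs (G cs) end.

Fixpoint p2g (t : ptree) : GenTree.tree nat :=
  let: PNode l cs := t in GenTree.Node l (map p2g cs).
Fixpoint g2p (t : GenTree.tree nat) : ptree :=
  match t with GenTree.Leaf _ => PNode 0 [::] | GenTree.Node l ts => PNode l (map g2p ts) end.
Lemma p2gK : cancel p2g g2p.
Proof.
elim/ptree_indIn => l cs IH /=; congr PNode; rewrite -map_comp -[RHS]map_id.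
by apply: eq_map_In.
Qed.
HB.instance Definition _ := Equality.copy ptree (can_type p2gK).

Fixpoint h2g (t : hmtree) : GenTree.tree nat :=
  match t with HW l cs => GenTree.Node l.+1 (map h2g cs)
             | HB cs => GenTree.Node 0 (map h2g cs) end.
Fixpoint g2h (t : GenTree.tree nat) : hmtree :=
  match t with GenTree.Leaf _ => HB [::]
  | GenTree.Node 0 ts => HB (map g2h ts)
  | GenTree.Node l.+1 ts => HW l (map g2h ts) end.
Lemma h2gK : cancel h2g g2h.
Proof.
elim/hm_indIn => [l|] cs IH /=; [congr HW|congr HB]; rewrite -map_comp -[RHS]map_id;
by apply: eq_map_In.
Qed.
HB.instance Definition _ := Equality.copy hmtree (can_type h2gK).

Lemma In_mem (T : eqType) (x : T) s : x \in s -> List.In x s.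
Proof. elim: s => //= y s IH; rewrite inE => /orP [/eqP ->|/IH]; by [left|right]. Qed.

Lemma ptree_ind2 (P : ptree -> Prop) :
  (forall l cs, (forall c, c \in cs -> P c) -> P (PNode l cs)) -> forall t, P t.
Proof. move=> H; elim/ptree_indIn => l cs IH; apply: H => c /In_mem; exact: IH. Qed.

Lemma hm_ind2 (P : hmtree -> Prop) :
  (forall l cs, (forall c, c \in cs -> P c) -> P (HW l cs)) ->
  (forall cs, (forall c, c \in cs -> P c) -> P (HB cs)) -> forall t, P t.
Proof.
move=> H1 H2; elim/hm_indIn => [l|] cs IH; [apply: H1|apply: H2] => c /In_mem; exact: IH.
Qed.

Lemma fmin_le a (ls : seq nat) : foldr minn a ls <= a /\ forall y, y \in ls -> foldr minn a ls <= y.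
Proof.
elim: ls => [|x s [IH1 IH2]] /=; first by split.
split; first by lia.
move=> y; rewrite inE => /orP [/eqP ->|/IH2]; lia.
Qed.
Lemma fmin_in a (ls : seq nat) : foldr minn a ls \in a :: ls.
Proof.
elim: ls => [|x s IH] /=; first by rewrite inE.
rewrite /minn; case: ltnP => _; first by rewrite !inE eqxx orbT.
move: IH; rewrite !inE => /orP [->|->] //; by rewrite ?orbT.
Qed.
Definition mn (ls : seq nat) := foldr minn (head 0 ls) ls.
Lemma mn_le ls y : y \in ls -> mn ls <= y.
Proof. exact: (fmin_le _ _).2. Qed.
Lemma mn_in ls : 0 < size ls -> mn ls \in ls.
Proof.
case: ls => // x s _; have h := fmin_in x (x :: s); rewrite /mn /=.
rewrite inE in h; case/orP: h => [/eqP h|h]; simpl in h.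
  by rewrite h inE eqxx.
exact: h.
Qed.
Lemma mn_eq ls m : m \in ls -> (forall y, y \in ls -> m <= y) -> mn ls = m.
Proof.
move=> hm hle; apply/eqP; rewrite eqn_leq mn_le //= hle //; apply: mn_in.
by case: ls hm {hle}.
Qed.
Lemma pbetaE t : pbeta t = mn (plabels t). Proof. by []. Qed.
Lemma hbetaE t : hbeta t = mn (hwhites t). Proof. by []. Qed.
Lemma mn_pred ls : mn (map predn ls) = (mn ls).-1.
Proof.
rewrite /mn; case: ls => //= x s.
suff H : forall a, foldr minn a.-1 (map predn s) = (foldr minn a s).-1.
  by rewrite H; lia.
move=> a; elim: s => //= y s ->; lia.
Qed.
Section Segs.
Variables (T : eqType) (f : T -> nat).

Fixpoint eflags (s : seq T) : seq bool :=
  match s with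
  | [::] => [::]
  | c :: s' => has (fun d => f d < f c) s' :: eflags s'
  end.

Fixpoint segs (s : seq T) : seq (seq T) :=
  match s with
  | [::] => [::]
  | c :: s' => if has (fun d => f d < f c) s' then
                 match segs s' with [::] => [:: [:: c]] | sg :: r => (c :: sg) :: r end
               else [:: c] :: segs s'
  end.

Lemma segs_flatten s : flatten (segs s) = s.
Proof.
elim: s => //= c s IH; case: ifP => _ //=; last by rewrite IH.
by case: (segs s) IH => [|sg r] /= <-.
Qed.

Lemma segs_ne s : all (fun sg => 0 < size sg) (segs s).
Proof.
elim: s => //= c s IH; case: ifP => _ //=.
by case: (segs s) IH => [|sg r] //= /andP [_ ->].
Qed.

Lemma last_ne (x0 y0 : T) sg : 0 < size sg -> last x0 sg = last y0 sg.
Proof. by case: sg. Qed.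

Lemma segs_head_min x0 s :
  all (fun d => f (last x0 (head [::] (segs s))) <= f d) s.
Proof.
elim: s => //= c s IH; case: ifP => hc /=.
  move: IH (segs_ne s) (segs_flatten s).
  case: (segs s) => [|sg r] /=; first by move=> _ _ <-; rewrite leqnn.
  move=> IH /andP [hsg _] hfl.
  rewrite (last_ne c x0 hsg) IH andbT.
  case/hasP: hc => d hd /ltnW; apply: leq_trans.
  by move/allP: IH; apply.
rewrite leqnn /=; apply/allP => d hd; rewrite leqNgt; apply/negP => h.
by move/negP: hc; apply; apply/hasP; exists d.
Qed.

Lemma segs_min x0 s :
  all (fun sg => all (fun d => f (last x0 sg) <= f d) sg) (segs s).
Proof.
elim: s => //= c s IH; case: ifP => hc /=; last by rewrite leqnn.
have := segs_head_min x0 (c :: s); rewrite /= hc.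
move: IH (segs_flatten s).
case: (segs s) => [|sg r] /=; first by rewrite leqnn.
move=> /andP [_ hr] hfl /andP [h1 h2]; rewrite h1 hr andbT /=.
by rewrite -hfl all_cat in h2; case/andP: h2.
Qed.

Lemma head_segs_in x0 s : 0 < size s -> last x0 (head [::] (segs s)) \in s.
Proof.
move=> hs; have := segs_flatten s; have := segs_ne s.
case: (segs s) => [|sg r] /=; first by move=> _ h; rewrite -h in hs.
move=> /andP [hsg _] <-; rewrite mem_cat; apply/orP; left.
by case: sg hsg => // y sg' _; rewrite /= mem_last.
Qed.

Lemma segs_sorted x0 s : uniq (map f s) ->
  sorted ltn (map (fun sg => f (last x0 sg)) (segs s)).
Proof.
elim: s => //= c s IH /andP [hcn hu]; case: ifP => hc /=.
  move: (IH hu) (segs_ne s).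
  case: (segs s) => [|sg r] //= hs /andP [hsg _].
  by rewrite (last_ne c x0 hsg).
case: s IH hu hcn hc => [|y s'] IH hu hcn hc; first by [].
have hin' := head_segs_in x0 (s := y :: s') isT.
move: hin' (IH hu) (segs_head_min x0 (y :: s')).
case: (segs (y :: s')) => [|sg r] //= hin' -> hm; rewrite andbT.
rewrite ltn_neqAle; apply/andP; split.
  apply/negP => /eqP e; move/negP: hcn; apply; rewrite e; exact: map_f.
rewrite leqNgt; apply/negP => h; move/negP: hc; apply; apply/hasP.
by exists (last x0 sg).
Qed.

Lemma size_eflags s : size (eflags s) = size s.
Proof. by elim: s => //= c s ->. Qed.

Lemma segs_young s : size (segs s) = count negb (eflags s).
Proof.
elim: s => //= c s IH; case: ifP => hc /=; last by rewrite IH.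
move: IH (segs_flatten s); case: (segs s) => [|sg r] //= IH.
by move=> h; rewrite -h in hc.
Qed.

Lemma segs_eld s : count id (eflags s) = sumn (map (fun sg => (size sg).-1) (segs s)).
Proof.
elim: s => //= c s IH; case: ifP => hc /=; last by rewrite IH.
move: IH (segs_flatten s) (segs_ne s); case: (segs s) => [|sg r] //= IH.
  by move=> h; rewrite -h in hc.
move=> _ /andP [hsg _]; rewrite IH; case: (size sg) hsg => //= k _; lia.
Qed.

Lemma segs_imp x0 (P Q : T -> bool) s : {in s, P =1 Q} ->
  sumn [seq (~~ p.1 && P p.2 : nat) | p <- zip (eflags s) s]
  = sumn (map (fun sg => Q (last x0 sg) : nat) (segs s)).
Proof.
elim: s => //= c s IH hPQ.
have IH' := IH (fun x hx => hPQ x (mem_behead (s := c :: s) hx)).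
case: ifP => hc /=; last by rewrite IH' hPQ ?inE ?eqxx.
move: IH' (segs_flatten s) (segs_ne s); case: (segs s) => [|sg r] //= IH'.
  by move=> h; rewrite -h in hc.
move=> _ /andP [hsg _]; by rewrite IH' /= (last_ne c x0 hsg).
Qed.

Lemma segs_cat_seg x0 sg rest L : 0 < size sg ->
  all (fun d => f (last x0 sg) <= f d) sg -> uniq (map f (sg ++ rest)) ->
  all (fun d => f (last x0 sg) < f d) rest -> segs rest = L ->
  segs (sg ++ rest) = sg :: L.
Proof.
elim: sg => // c sg IHs _.
case: sg IHs => [|c2 sg] IHs hmin hu hrest hL.
  have E : segs ([:: c] ++ rest) = if has (fun d => f d < f c) rest then
     match segs rest with [::] => [:: [:: c]] | sg :: r => (c :: sg) :: r end
     else [:: c] :: segs rest by [].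
  rewrite E hL.
  have -> : has (fun d => f d < f c) rest = false.
    apply/negP => /hasP [d hd]; move/allP: hrest => /(_ d hd) /=; lia.
  by [].
have E : segs ((c :: c2 :: sg) ++ rest) = if has (fun d => f d < f c) ((c2 :: sg) ++ rest) then
     match segs ((c2 :: sg) ++ rest) with [::] => [:: [:: c]] | sg :: r => (c :: sg) :: r end
     else [:: c] :: segs ((c2 :: sg) ++ rest) by [].
have hl0 : last x0 [:: c, c2 & sg] = last c2 sg by [].
move: hmin hu hrest; rewrite hl0 [all _ (c :: _)]/= cat_cons map_cons cons_uniq.
move=> /andP [hc hmin] /andP [hcn hu] hrest.
have hl : last x0 (c2 :: sg) = last c2 sg by [].
rewrite E.
have -> : has (fun d => f d < f c) ((c2 :: sg) ++ rest).
  apply/hasP; exists (last c2 sg); first by rewrite mem_cat mem_last.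
  rewrite ltn_neqAle hc andbT; apply/negP => /eqP e; move/negP: hcn; apply.
  rewrite -e; apply: map_f; by rewrite mem_cat mem_last.
by rewrite IHs // hl.
Qed.

Lemma flatten_segs x0 (L : seq (seq T)) :
  all (fun sg => 0 < size sg) L ->
  all (fun sg => all (fun d => f (last x0 sg) <= f d) sg) L ->
  sorted ltn (map (fun sg => f (last x0 sg)) L) ->
  uniq (map f (flatten L)) ->
  segs (flatten L) = L.
Proof.
elim: L => //= sg L IH /andP [hne hnes] /andP [hmin hmins] hsort hu.
have hsort' : sorted ltn (map (fun sg => f (last x0 sg)) L) by exact: path_sorted hsort.
move: (hu); rewrite map_cat cat_uniq => /and3P [hu1 hdis hu2].
have hrest : all (fun d => f (last x0 sg) < f d) (flatten L).
  have hall := order_path_min ltn_trans hsort.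
  apply/allP => d; case/flattenP => sg2 hsg2 hd.
  move/allP: hall => /(_ (f (last x0 sg2))) /(_ (map_f _ hsg2)) hlt.
  move/allP: hmins => /(_ sg2 hsg2) /allP /(_ d hd) hle; exact: leq_trans hlt hle.
exact: (segs_cat_seg hne hmin hu hrest (IH hnes hmins hsort' hu2)).
Qed.
End Segs.
Lemma segs_map (T U : eqType) (f : T -> nat) (g : T -> U) (f' : U -> nat) s :
  {in s &, forall x y, (f' (g x) < f' (g y)) = (f x < f y)} ->
  segs f' (map g s) = map (map g) (segs f s).
Proof.
elim: s => //= c s IH H.
have H' : {in s &, forall x y, (f' (g x) < f' (g y)) = (f x < f y)}.
  by move=> x y hx hy; apply: H; rewrite inE ?hx ?hy orbT.
have -> : has (fun d => f' d < f' (g c)) (map g s) = has (fun d => f d < f c) s.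
  rewrite has_map; apply: eq_in_has => d hd /=; apply: H; by rewrite inE ?hd ?eqxx ?orbT.
rewrite IH //; case: ifP => _ //; by case: (segs f s).
Qed.

Lemma flatten_map_flatten (A B : Type) (g : A -> seq B) (S : seq (seq A)) :
  flatten (map (fun sg => flatten (map g sg)) S) = flatten (map g (flatten S)).
Proof. elim: S => //= sg S ->; by rewrite map_cat flatten_cat. Qed.

Lemma sumn_map_flatten (A : Type) (g : A -> nat) (S : seq (seq A)) :
  sumn (map (fun sg => sumn (map g sg)) S) = sumn (map g (flatten S)).
Proof. elim: S => //= sg S ->; by rewrite map_cat sumn_cat. Qed.

Lemma uniq_map_sub (A : eqType) (g : A -> seq nat) (h : A -> nat) s :
  uniq (flatten (map g s)) -> (forall x, x \in s -> h x \in g x) -> uniq (map h s).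
Proof.
elim: s => //= x s IH; rewrite cat_uniq => /and3P [_ hdis hu] hh.
rewrite IH // ?andbT; last by move=> y hy; apply: hh; rewrite inE hy orbT.
apply/mapP => [[y hy e]].
have hy' : h y \in flatten (map g s).
  apply/flattenP; exists (g y); first exact: map_f.
  by apply: hh; rewrite inE hy orbT.
by move/hasPn: hdis => /(_ _ hy'); rewrite /= -e (hh x (mem_head _ _)).
Qed.

Lemma uniq_flatten_in (A : eqType) (g : A -> seq nat) s x :
  uniq (flatten (map g s)) -> x \in s -> uniq (g x).
Proof.
elim: s => //= y s IH; rewrite cat_uniq => /and3P [hy _ hu].
by rewrite inE => /orP [/eqP ->|/IH]; auto.
Qed.

Definition mk (sg : seq hmtree) : hmtree := if sg is [:: x] then x else HB sg.

Fixpoint th (t : ptree) : hmtree :=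
  let: PNode l cs := t in HW l.-1 (map mk (segs hbeta (map th cs))).
Definition thL cs := map mk (segs hbeta (map th cs)).
Lemma thE l cs : th (PNode l cs) = HW l.-1 (thL cs). Proof. by []. Qed.

Fixpoint ps (t : hmtree) : ptree :=
  match t with
  | HW l cs => PNode l.+1 (flatten (map (fun c => match c with
                   | HW _ _ => [:: ps c] | HB ds => map ps ds end) cs))
  | HB _ => PNode 0 [::]
  end.
Definition unb c := match c with HW _ _ => [:: ps c] | HB ds => map ps ds end.
Lemma psE l cs : ps (HW l cs) = PNode l.+1 (flatten (map unb cs)). Proof. by []. Qed.

Definition p0 := PNode 0 [::].
Definition pos t := all (fun x => 0 < x) (plabels t).

Lemma whites_mk sg : 0 < size sg -> hwhites (mk sg) = flatten (map hwhites sg).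
Proof. case: sg => // x [|y s] _ //=; by rewrite cats0. Qed.

Lemma whites_thL cs : flatten (map hwhites (thL cs)) = flatten (map hwhites (map th cs)).
Proof.
rewrite /thL -map_comp.
have -> : map (hwhites \o mk) (segs hbeta (map th cs)) =
          map (fun sg => flatten (map hwhites sg)) (segs hbeta (map th cs)).
  apply/eq_in_map => sg hsg /=; apply: whites_mk.
  by move/allP: (segs_ne hbeta (map th cs)) => /(_ sg hsg).
by rewrite flatten_map_flatten segs_flatten.
Qed.

Lemma th_whites t : hwhites (th t) = map predn (plabels t).
Proof.
elim/ptree_ind2: t => l cs IH; rewrite thE /= whites_thL map_flatten -map_comp.
rewrite -[in RHS]map_comp; congr (_ :: flatten _); apply/eq_in_map => c hc /=; exact: IH.
Qed.

Lemma hbeta_th t : hbeta (th t) = (pbeta t).-1.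
Proof. by rewrite hbetaE th_whites mn_pred. Qed.

Lemma pbeta_in t : pbeta t \in plabels t.
Proof. apply: mn_in; by case: t. Qed.

Lemma pbeta_pos t : pos t -> 0 < pbeta t.
Proof. by move/allP; apply; apply: pbeta_in. Qed.

Lemma thL_eq cs : all pos cs -> thL cs = map (fun sg => mk (map th sg)) (segs pbeta cs).
Proof.
move=> hp; rewrite /thL (segs_map (f := pbeta)) -?map_comp //.
move=> x y hx hy; rewrite !hbeta_th.
have := pbeta_pos (allP hp x hx); have := pbeta_pos (allP hp y hy); lia.
Qed.

Lemma elder_flagsE cs : elder_flags cs = eflags pbeta cs.
Proof. by elim: cs => //= c cs ->. Qed.
Lemma last_in (T : eqType) (x0 : T) s : 0 < size s -> last x0 s \in s.
Proof. by case: s => // x s _; rewrite /= mem_last. Qed.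

Lemma hbeta_in t : 0 < size (hwhites t) -> hbeta t \in hwhites t.
Proof. exact: mn_in. Qed.
Lemma hbeta_le t y : y \in hwhites t -> hbeta t <= y.
Proof. exact: mn_le. Qed.

Lemma th_whites_ne t : 0 < size (hwhites (th t)).
Proof. by case: t. Qed.

Lemma hbeta_mk_th x0 sg : 0 < size sg -> all pos sg ->
  all (fun d => pbeta (last x0 sg) <= pbeta d) sg ->
  hbeta (mk (map th sg)) = hbeta (th (last x0 sg)).
Proof.
move=> hne hp hmin; rewrite hbetaE whites_mk ?size_map //; apply: mn_eq.
  apply/flattenP; exists (hwhites (th (last x0 sg))).
    by apply: map_f; apply: map_f; exact: last_in.
  exact/hbeta_in/th_whites_ne.
move=> y /flattenP [w /mapP [e /mapP [c hc ->] ->] hy].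
apply: leq_trans (hbeta_le hy); rewrite !hbeta_th.
have := allP hmin c hc; lia.
Qed.

Lemma sorted_pred x s : path ltn x s -> 0 < x -> path ltn x.-1 (map predn s).
Proof. elim: s x => //= y s IH x /andP [hxy hp] hx; rewrite IH ?andbT //; lia. Qed.

Lemma sumn_mapD (A : Type) (a b : A -> nat) s :
  sumn (map (fun x => a x + b x) s) = sumn (map a s) + sumn (map b s).
Proof. elim: s => //= x s ->; lia. Qed.

Lemma segs_sub (T : eqType) (f : T -> nat) s sg c : sg \in segs f s -> c \in sg -> c \in s.
Proof. move=> hsg hc; rewrite -(segs_flatten f s); apply/flattenP; by exists sg. Qed.

Lemma uniq_pbeta cs : uniq (flatten (map plabels cs)) -> uniq (map pbeta cs).
Proof. move=> hu; apply: (uniq_map_sub hu) => x _; exact: pbeta_in. Qed.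

Lemma last_map_th sg c1 : last (HB [::]) (map th (c1 :: sg)) = th (last p0 (c1 :: sg)).
Proof. by rewrite /= last_map. Qed.

Lemma hwfB s : hwf (HB s) = [&& 1 < size s, all isW s,
  all (fun d => hbeta (last (HB [::]) s) <= hbeta d) s & all hwf s].
Proof. by []. Qed.

Lemma thL_wf cs : all pos cs -> uniq (flatten (map plabels cs)) ->
  (forall c, c \in cs -> hwf (th c)) ->
  sorted ltn (map hbeta (thL cs)) && all hwf (thL cs).
Proof.
move=> hp hu IH; rewrite thL_eq //.
have hne := segs_ne pbeta cs; have hmin := segs_min pbeta p0 cs.
have hsub := @segs_sub _ pbeta cs.
have hb : map hbeta (map (fun sg => mk (map th sg)) (segs pbeta cs)) =
          map predn (map (fun sg => pbeta (last p0 sg)) (segs pbeta cs)).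
  rewrite -!map_comp; apply/eq_in_map => sg hsg /=.
  rewrite (hbeta_mk_th (x0 := p0)) ?hbeta_th //.
  - exact: (allP hne).
  - apply/allP => c hc; apply: (allP hp); exact: hsub hsg hc.
  - exact: (allP hmin).
rewrite hb; apply/andP; split.
  have := segs_sorted p0 (uniq_pbeta hu).
  case: (segs pbeta cs) hne hsub => //= sg S /andP [hsg _] hsub' hs.
  apply: sorted_pred => //; apply: pbeta_pos; apply: (allP hp); apply: (hsub' sg).
    by rewrite inE eqxx.
  exact: last_in.
apply/allP => b /mapP [sg hsg ->].
case: sg hsg => [|c1 [|c2 r]] hsg.
- by move: (allP hne _ hsg).
- by apply: IH; apply: (hsub _ _ hsg); rewrite inE eqxx.
have -> : mk (map th [:: c1, c2 & r]) = HB (map th [:: c1, c2 & r]) by [].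
rewrite hwfB; apply/and4P; split => //.
- by rewrite all_map; apply/allP; case.
- rewrite (last_map_th _ c1) all_map; apply/allP => d hd /=; rewrite !hbeta_th.
  by have := allP (allP hmin _ hsg) d hd; rewrite /=; lia.
- by rewrite all_map; apply/allP => d hd /=; apply: IH; exact: hsub hsg hd.
Qed.

Lemma sumn_eq_in (T : eqType) (a b : T -> nat) s : {in s, a =1 b} ->
  sumn (map a s) = sumn (map b s).
Proof. by move/eq_in_map => ->. Qed.

Lemma bdeg_mk sg : 0 < size sg -> bdeg (mk sg) = (size sg).-1 + sumn (map bdeg sg).
Proof. by case: sg => [|x [|y s]] //= _; rewrite addn0. Qed.

Lemma thL_bdeg cs : all pos cs ->
  sumn (map bdeg (thL cs)) = count id (eflags pbeta cs) + sumn (map (bdeg \o th) cs).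
Proof.
move=> hp; rewrite thL_eq // segs_eld -map_comp.
have hne := segs_ne pbeta cs.
rewrite (@sumn_eq_in _ _ (fun sg => (size sg).-1 + sumn (map (bdeg \o th) sg)) (segs pbeta cs)); last first.
  move=> sg hsg; change (bdeg (mk (map th sg)) = (size sg).-1 + sumn (map (bdeg \o th) sg)).
  rewrite bdeg_mk; first by rewrite size_map map_comp.
  by rewrite size_map; exact: (allP hne).
by rewrite sumn_mapD sumn_map_flatten segs_flatten.
Qed.

Lemma thL_imp l cs : 0 < l -> all pos cs -> l \notin flatten (map plabels cs) ->
  sumn [seq (isW b && (l.-1 > hbeta b) : nat) + himp (Some l.-1) b | b <- thL cs]
  = sumn [seq (~~ p.1 && ~~ (l < pbeta p.2) : nat) | p <- zip (eflags pbeta cs) cs]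
    + sumn (map (himp None \o th) cs).
Proof.
move=> hl hp hn; rewrite thL_eq // -map_comp.
have hPQ : {in cs, (fun c => ~~ (l < pbeta c)) =1 (fun c => l.-1 > hbeta (th c))}.
  move=> c hc; rewrite hbeta_th.
  have hpc := pbeta_pos (allP hp c hc).
  have hne : l != pbeta c.
    apply/negP => /eqP e; move/negP: hn; apply; apply/flattenP; exists (plabels c).
      exact: map_f.
    by rewrite e pbeta_in.
  move: hne => /eqP; lia.
have hne := segs_ne pbeta cs.
rewrite (@sumn_eq_in _ _ (fun sg => (l.-1 > hbeta (th (last p0 sg))) + sumn (map (himp None \o th) sg)) (segs pbeta cs)); last first.
  move=> sg hsg; case: sg hsg => [|c1 [|c2 r]] hsg.
  - by move: (allP hne _ hsg).
  - change ((isW (th c1) && (l.-1 > hbeta (th c1)) : nat) + himp (Some l.-1) (th c1)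
       = (l.-1 > hbeta (th c1)) + (himp None (th c1) + 0)).
    by case: c1 {hsg} => l1 cs1; rewrite addn0.
  change ((isW (HB (map th [:: c1, c2 & r])) && (l.-1 > hbeta (HB (map th [:: c1, c2 & r]))) : nat)
     + himp (Some l.-1) (HB (map th [:: c1, c2 & r]))
     = (l.-1 > hbeta (th (last p0 [:: c1, c2 & r]))) + sumn (map (himp None \o th) [:: c1, c2 & r])).
  rewrite -(last_map_th _ c1) map_comp.
  by [].
rewrite sumn_mapD sumn_map_flatten segs_flatten; congr (_ + _).
by rewrite (@segs_imp _ pbeta p0 _ _ cs hPQ).
Qed.

Lemma himp_mk sg : 0 < size sg -> himp None (mk sg) = sumn (map (himp None) sg).
Proof. by case: sg => [|x [|y s]] //= _; rewrite addn0. Qed.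

Lemma thL_imp_top cs : sumn (map (himp None) (thL cs)) = sumn (map (himp None \o th) cs).
Proof.
rewrite /thL -(map_comp (himp None) mk).
have hne := segs_ne hbeta (map th cs).
rewrite (@sumn_eq_in _ _ (fun sg => sumn (map (himp None) sg)) (segs hbeta (map th cs))); last first.
  move=> sg hsg /=; apply: himp_mk; exact: (allP hne).
by rewrite sumn_map_flatten segs_flatten map_comp.
Qed.

Lemma sumn_zip_zero (T : Type) (P : T -> bool) e s : all (fun x => ~~ P x) s ->
  sumn [seq (~~ p.1 && P p.2 : nat) | p <- zip e s] = 0.
Proof.
elim: s e => [|x s IH] [|b e] //= /andP [hx hs]; rewrite IH // (negbTE hx); lia.
Qed.

Lemma thL_size cs : all pos cs -> size (thL cs) = count negb (eflags pbeta cs).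
Proof. by move=> hp; rewrite thL_eq // size_map segs_young. Qed.
Definition segof (c : hmtree) : seq hmtree := if c is HB ds then ds else [:: c].

Lemma isW_ne d : isW d -> 0 < size (hwhites d).
Proof. by case: d. Qed.

Lemma hbeta_HB ds : 0 < size ds -> all isW ds ->
  all (fun d => hbeta (last (HB [::]) ds) <= hbeta d) ds ->
  hbeta (HB ds) = hbeta (last (HB [::]) ds).
Proof.
move=> hne hw hmin; rewrite hbetaE; apply: mn_eq.
  apply/flattenP; exists (hwhites (last (HB [::]) ds)).
    by apply: map_f; exact: last_in.
  apply/hbeta_in/isW_ne; apply: (allP hw); exact: last_in.
move=> y /flattenP [w /mapP [d hd ->] hy].
apply: leq_trans (hbeta_le hy); exact: (allP hmin).
Qed.

Lemma labels_unbL cs : (forall c, c \in cs -> hwf c -> flatten (map plabels (unb c)) = map succn (hwhites c)) ->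
  all hwf cs ->
  flatten (map plabels (flatten (map unb cs))) = map succn (flatten (map hwhites cs)).
Proof.
move=> IH hw; rewrite -flatten_map_flatten -map_comp map_flatten -map_comp.
congr flatten; apply/eq_in_map => c hc /=; apply: IH => //; exact: (allP hw).
Qed.

Lemma ps_labels w : hwf w -> flatten (map plabels (unb w)) = map succn (hwhites w).
Proof.
elim/hm_ind2: w => [l cs IH|ds IH].
  move=> /= /andP [_ hw]; rewrite cats0 labels_unbL //.
move=> hw; rewrite hwfB in hw; case/and4P: hw => _ hW _ hw.
rewrite /= map_flatten -!map_comp; congr flatten; apply/eq_in_map => d hd /=.
have := IH d hd (allP hw d hd); case: d hd {IH} (allP hW d hd) => // l cs _ _ /=.
by rewrite cats0.
Qed.

Lemma thL_ps cs : sorted ltn (map hbeta cs) -> all hwf cs ->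
  uniq (flatten (map hwhites cs)) ->
  (forall c, c \in cs -> map th (unb c) = segof c) ->
  thL (flatten (map unb cs)) = cs.
Proof.
move=> hs hw hu IH; rewrite /thL map_flatten -map_comp.
have -> : map (map th \o unb) cs = map segof cs by apply/eq_in_map.
have hsegW : forall c, c \in cs -> all isW (segof c).
  move=> c hc; case: c hc => //= ds hc; have := allP hw _ hc; rewrite hwfB.
  by case/and4P.
have hwh : forall c, c \in cs -> flatten (map hwhites (segof c)) = hwhites c.
  by case => //= l c _; rewrite cats0.
rewrite (flatten_segs (x0 := HB [::])).
- rewrite -map_comp -[RHS]map_id; apply/eq_in_map => c hc /=.
  case: c hc => // [[|x [|y r]]] hc //; have := allP hw _ hc; by rewrite hwfB.
- apply/allP => sg /mapP [c hc ->]; case: c hc => //= ds hc.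
  have := allP hw _ hc; rewrite hwfB => /and4P [h _ _ _]; exact: ltnW.
- apply/allP => sg /mapP [c hc ->]; case: c hc => //= [l c _|ds hc]; first by rewrite leqnn.
  have := allP hw _ hc; rewrite hwfB; by case/and4P.
- rewrite -map_comp; suff -> : map ((fun sg => hbeta (last (HB [::]) sg)) \o segof) cs = map hbeta cs by [].
  apply/eq_in_map => c hc; case: c hc => //= ds hc.
  have := allP hw _ hc; rewrite hwfB => /and4P [h1 h2 h3 _].
  by rewrite hbeta_HB // ltnW.
- apply: (uniq_map_sub (g := hwhites)).
    rewrite -flatten_map_flatten -map_comp.
    suff -> : map ((fun sg => flatten (map hwhites sg)) \o segof) cs = map hwhites cs by [].
    apply/eq_in_map => c hc; exact: hwh.
  move=> x /flattenP [sg /mapP [c hc ->] hx].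
  apply/hbeta_in/isW_ne; exact: (allP (hsegW c hc)).
Qed.

Lemma th_ps w : hwf w -> uniq (hwhites w) -> map th (unb w) = segof w.
Proof.
elim/hm_ind2: w => [l cs IH|ds IH].
  move=> /andP [hs hw] /andP [_ hu].
  change ([:: th (PNode l.+1 (flatten (map unb cs)))] = [:: HW l cs]).
  rewrite thE thL_ps //.
  move=> c hc; apply: IH => //; first exact: (allP hw).
  exact: uniq_flatten_in hu hc.
move=> hw hu; rewrite hwfB in hw; case/and4P: hw => _ hW _ hw.
rewrite /= -map_comp -[RHS]map_id; apply/eq_in_map => d hd /=.
have := IH d hd (allP hw d hd) (uniq_flatten_in hu hd).
case: d hd {IH} (allP hW d hd) => // l cs _ _ [] e.
by change (HW l (thL (flatten (map unb cs))) = HW l cs); congr HW; exact: e.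
Qed.

Lemma unb_thL cs : (forall c, c \in cs -> ps (th c) = c) -> flatten (map unb (thL cs)) = cs.
Proof.
move=> IH; rewrite /thL -map_comp.
have hne := segs_ne hbeta (map th cs).
have hsub := @segs_sub _ hbeta (map th cs).
have -> : map (unb \o mk) (segs hbeta (map th cs)) = map (map ps) (segs hbeta (map th cs)).
  apply/eq_in_map => sg hsg /=.
  have hW : all isW sg.
    apply/allP => x hx; have := hsub _ _ hsg hx; by case/mapP => c _ ->; case: c.
  case: sg hsg hW {hne hsub} => [|x [|y r]] //= hsg.
  by case: x hsg.
rewrite -map_flatten segs_flatten -map_comp -[RHS]map_id; apply/eq_in_map => c hc; exact: IH.
Qed.

Lemma ps_th t : pos t -> ps (th t) = t.
Proof.
elim/ptree_ind2: t => l cs IH hp; rewrite thE psE unb_thL.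
  by move: hp; rewrite /pos /= => /andP [hl _]; rewrite prednK.
move=> c hc; apply: IH => //; apply/allP => x hx; apply: (allP hp).
rewrite /= inE; apply/orP; right; apply/flattenP; exists (plabels c) => //; exact: map_f.
Qed.
Lemma fwd_tree t : pos t -> uniq (plabels t) ->
  [/\ hwf (th t), bdeg (th t) = eldT t, himp None (th t) = impT t & ps (th t) = t].
Proof.
move=> hp hu; split; last exact: ps_th.
- elim/ptree_ind2: t hp hu => l cs IH hp /andP [hl hu].
  have hpc : all pos cs.
    apply/allP => c hc; apply/allP => x hx; apply: (allP hp).
    rewrite /= inE; apply/orP; right; apply/flattenP; exists (plabels c) => //; exact: map_f.
  rewrite thE; apply: thL_wf => // c hc; apply: IH => //; first exact: (allP hpc).
  exact: uniq_flatten_in hu hc.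
- elim/ptree_ind2: t hp hu => l cs IH hp /andP [hl hu].
  have hpc : all pos cs.
    apply/allP => c hc; apply/allP => x hx; apply: (allP hp).
    rewrite /= inE; apply/orP; right; apply/flattenP; exists (plabels c) => //; exact: map_f.
  rewrite thE; change (sumn (map bdeg (thL cs)) = count id (elder_flags cs) + sumn (map eldT cs)).
  rewrite thL_bdeg // elder_flagsE; congr (_ + sumn _); apply/eq_in_map => c hc /=.
  apply: IH => //; first exact: (allP hpc); exact: uniq_flatten_in hu hc.
- elim/ptree_ind2: t hp hu => l cs IH hp /andP [hl hu].
  have hpc : all pos cs.
    apply/allP => c hc; apply/allP => x hx; apply: (allP hp).
    rewrite /= inE; apply/orP; right; apply/flattenP; exists (plabels c) => //; exact: map_f.
  have hl0 : 0 < l by apply: (allP hp); rewrite /= inE eqxx.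
  rewrite thE; change (sumn [seq (isW b && (l.-1 > hbeta b) : nat) + himp (Some l.-1) b | b <- thL cs]
    = sumn [seq (~~ p.1 && ~~ (l < pbeta p.2) : nat) | p <- zip (elder_flags cs) cs]
      + sumn (map impT cs)).
  rewrite thL_imp // elder_flagsE; congr (_ + sumn _); apply/eq_in_map => c hc /=.
  apply: IH => //; first exact: (allP hpc); exact: uniq_flatten_in hu hc.
Qed.

Definition thF (t : ptree) := thL (pchildren t).
Definition psF (F : seq hmtree) := PNode 1 (flatten (map unb F)).

Lemma iota_succ n : map succn (iota 1 n) = iota 2 n.
Proof. by rewrite (_ : iota 2 n = iota (1 + 1) n) // iotaDl. Qed.
Lemma iota_pred n : map predn (iota 2 n) = iota 1 n.
Proof. by rewrite -iota_succ -map_comp map_id_in //. Qed.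

Section Main.
Variable n : nat.

Lemma O_facts t : in_O n t ->
  exists cs, [/\ t = PNode 1 cs, all pos cs, uniq (flatten (map plabels cs)),
     1 \notin flatten (map plabels cs) & perm_eq (flatten (map plabels cs)) (iota 2 n)].
Proof.
case: t => l cs /andP [/eqP /= -> hperm]; exists cs.
have hu : uniq (1 :: flatten (map plabels cs)) by rewrite (perm_uniq hperm); exact: (iota_uniq 1 n.+1).
move: (hu) => /andP [h1 hu']; split => //.
- apply/allP => c hc; apply/allP => x hx.
  have : x \in iota 1 n.+1.
    rewrite -(perm_mem hperm) inE; apply/orP; right; apply/flattenP.
    by exists (plabels c) => //; exact: map_f.
  by rewrite mem_iota => /andP [].
- by rewrite -(perm_cons 1).
Qed.

Lemma fwd_in t : in_O n t -> in_H n (thF t).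
Proof.
case/O_facts => cs [-> hp hu h1 hperm]; rewrite /in_H /thF /=.
have IH : forall c, c \in cs -> hwf (th c).
  move=> c hc; have [] := fwd_tree (allP hp c hc) (uniq_flatten_in hu hc) => //.
case/andP: (thL_wf hp hu IH) => -> ->; rewrite /=.
rewrite whites_thL -map_comp.
have -> : map (hwhites \o th) cs = map (map predn \o plabels) cs.
  by apply/eq_in_map => c _ /=; rewrite th_whites.
by rewrite map_comp -map_flatten -iota_pred perm_map.
Qed.

Lemma bwd_in F : in_H n F -> in_O n (psF F).
Proof.
case/and3P => hs hw hperm; rewrite /in_O /psF /=.
rewrite labels_unbL //; last by move=> c _; exact: ps_labels.
by rewrite -iota_succ -/(map succn (iota 1 n)) perm_cons perm_map.
Qed.

Lemma psF_thF t : in_O n t -> psF (thF t) = t.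
Proof.
case/O_facts => cs [-> hp hu h1 hperm]; rewrite /psF /thF /= unb_thL //.
move=> c hc; exact: ps_th (allP hp c hc).
Qed.

Lemma thF_psF F : in_H n F -> thF (psF F) = F.
Proof.
case/and3P => hs hw hperm; rewrite /psF /thF /=.
have hu : uniq (flatten (map hwhites F)) by rewrite (perm_uniq hperm) iota_uniq.
apply: thL_ps => // c hc; apply: th_ps; first exact: (allP hw).
exact: uniq_flatten_in hu hc.
Qed.

Lemma stats t : in_O n t ->
  [/\ young_v t = treeF (thF t), eldT t = bdegF (thF t) & impT t = impF (thF t)].
Proof.
case/O_facts => cs [-> hp hu h1 hperm].
have IH : forall c, c \in cs -> [/\ hwf (th c), bdeg (th c) = eldT c, himp None (th c) = impT c & ps (th c) = c].
  move=> c hc; exact: fwd_tree (allP hp c hc) (uniq_flatten_in hu hc).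
split.
- rewrite /young_v /deg_v /eld_v /treeF /thF /= thL_size // elder_flagsE.
  have := count_predC id (eflags pbeta cs); rewrite size_eflags.
  have -> : count (predC id) (eflags pbeta cs) = count negb (eflags pbeta cs) by [].
  by move=> <-; rewrite addKn.
- rewrite /bdegF /thF /= thL_bdeg // elder_flagsE; congr (_ + sumn _).
  by apply/eq_in_map => c hc /=; case: (IH c hc).
  rewrite /impF /thF /= thL_imp_top (@sumn_zip_zero _ (fun x => ~~ (1 < pbeta x)) (elder_flags cs) cs) ?add0n.
    by congr sumn; apply/eq_in_map => c hc /=; case: (IH c hc).
  apply/allP => c hc; rewrite negbK.
  have hin : pbeta c \in flatten (map plabels cs).
    by apply/flattenP; exists (plabels c); [exact: map_f | exact: pbeta_in].
  have := pbeta_pos (allP hp c hc); have : pbeta c != 1.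
    by apply/eqP => e; rewrite -e hin in h1.
  move/eqP; lia.
Qed.
End Main.

Unset Implicit Arguments.
Theorem proposition3p2 (n : nat) : 1 <= n ->
  exists theta : {T : ptree | in_O n T} -> {F : seq hmtree | in_H n F},
    bijective theta /\
    forall T : {T : ptree | in_O n T},
      [/\ young_v (proj1_sig T) = treeF (proj1_sig (theta T)),
          eldT (proj1_sig T) = bdegF (proj1_sig (theta T))
        & impT (proj1_sig T) = impF (proj1_sig (theta T))].
Proof.
move=> _.
exists (fun T => exist _ (thF (proj1_sig T)) (fwd_in (proj2_sig T))); split.
  exists (fun F => exist _ (psF (proj1_sig F)) (bwd_in (proj2_sig F))).
    move=> [T hT]; apply: val_inj => /=; exact: (psF_thF hT).
  move=> [F hF]; apply: val_inj => /=; exact: (thF_psF hF).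
move=> [T hT] /=; exact: (stats hT).
Qed.
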